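(* In the sleeping multi-armed bandit setting, let $(\ell_t)_{t\ge1}$ be i.i.d. random loss vectors in $[0,1]^K$ with mean vector $\mu$, where for each $t$, $\ell_t$ is independent of everything determined before the learner observes $\ell_t(k_t)$ at round $t$ (including $S_1,\dots,S_t$ and $k_1,\dots,k_t$), and let $(S_t)_{t\ge1}$ be any sequence of availability sets such that $S_t$ may depend only on $(\ell_s)_{s\le t-1}$ (and past play). Then for any algorithm, $$\max_{\pi}R_T^{\mathrm{policy}}(\pi)=\max_{\sigma}\mathbb E\big[R_T^{\mathrm{ordering}}(\sigma)\big],$$ where $\pi$ ranges over all policies and $\sigma$ over all orderings of $[K]$.
   Context: Sleeping multi-armed bandit setting: $K$ arms $[K]$. At each round $t$ a nonempty availability set $S_t\subseteq[K]$ is revealed, the learner (possibly randomized, using only $S_1,\dots,S_t$, previously observed losses and internal randomness) selects $k_t\in S_t$ and observes $\ell_t(k_t)$. An ordering is a permutation $\sigma=(\sigma_1,\dots,\sigma_K)$ of $[K]$; for nonempty $S\subseteq[K]$, $\sigma(S)=\sigma_m$ with $m=\min\{i:\sigma_i\in S\}$. Ordering regret: $R_T^{\mathrm{ordering}}(\sigma)=\sum_{t=1}^T\big(\ell_t(k_t)-\ell_t(\sigma(S_t))\big)$. A policy is a map $\pi$ from nonempty subsets of $[K]$ to $[K]$ with $\pi(S)\in S$. Policy regret: $R_T^{\mathrm{policy}}(\pi)=\mathbb E\big[\sum_{t=1}^T\ell_t(k_t)-\sum_{t=1}^T\ell_t(\pi(S_t))\big]$, the expectation being over availabilities, losses and the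 learner's randomness. *)

(* Defs.v *)
From HB Require Import structures.
From mathcomp Require Import all_boot all_order all_algebra all_fingroup.
From mathcomp Require Import all_classical all_reals all_analysis.
Set Implicit Arguments. Unset Strict Implicit. Unset Printing Implicit Defensive.
Import Order.TTheory GRing.Theory Num.Theory.
Local Open Scope classical_set_scope.
Local Open Scope ring_scope.

(* An ordering is a permutation sigma of 'I_K, read as the
   sequence (sigma 0, ..., sigma (K-1)).  [ord_sel sigma S d] is the first
   element of that sequence lying in S; the default d is only used when S is
   empty (never the case in the theorem, where d is the chosen arm k_t in S_t). *)
Definition ord_sel (K : nat) (sigma : {perm 'I_K}) (S : {set 'I_K}) (d : 'I_K)
  : 'I_K := nth d [seq sigma i | i <- enum 'I_K & sigma i \in S] 0.

Definition is_policy (K : nat) (pi : {ffun {set 'I_K} -> 'I_K}) : Prop :=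
  forall S : {set 'I_K}, S != finset.set0 -> pi S \in S.

Definition loss_event {d} {T : measurableType d} {R : realType} (K : nat)
  (loss : nat -> 'I_K -> T -> R) (t : nat) (C : 'I_K -> set R) : set T :=
  [set w | forall i, C i (loss t i w)].

Definition history_event {d} {T : measurableType d} {R : realType} (K : nat)
  (loss : nat -> 'I_K -> T -> R) (S : nat -> T -> {set 'I_K})
  (k : nat -> T -> 'I_K) (t : nat)
  (A : nat -> {set 'I_K}) (j : nat -> 'I_K) (B : nat -> 'I_K -> set R) : set T :=
  [set w | (forall s, (s <= t)%N -> S s w = A s /\ k s w = j s) /\
           (forall s, (s < t)%N -> forall i, B s i (loss s i w))].

Definition policy_regret {d} {T : measurableType d} {R : realType} (K : nat)
  (P : probability T R) (loss : nat -> 'I_K -> T -> R)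
  (S : nat -> T -> {set 'I_K}) (k : nat -> T -> 'I_K) (Tn : nat)
  (pi : {ffun {set 'I_K} -> 'I_K}) : \bar R :=
  'E_P[fun w => \sum_(t < Tn) loss t (k t w) w
                - \sum_(t < Tn) loss t (pi (S t w)) w].

Definition exp_ordering_regret {d} {T : measurableType d} {R : realType}
  (K : nat) (P : probability T R) (loss : nat -> 'I_K -> T -> R)
  (S : nat -> T -> {set 'I_K}) (k : nat -> T -> 'I_K) (Tn : nat)
  (sigma : {perm 'I_K}) : \bar R :=
  'E_P[fun w => \sum_(t < Tn)
                  (loss t (k t w) w - loss t (ord_sel sigma (S t w) (k t w)) w)].

(* Main.v *)
Require Import Defs.
From HB Require Import structures.
From mathcomp Require Import all_boot all_order all_algebra all_fingroup.
From mathcomp Require Import all_classical all_reals all_analysis.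
Import Order.TTheory GRing.Theory Num.Theory.
Local Open Scope classical_set_scope.
Local Open Scope ring_scope.
Lemma indep_int d (O : measurableType d) (R : realType) (P : probability O R)
  (E : set O) (mE : measurable E) (X Y : O -> R)
  (mX : measurable_fun setT X) (mY : measurable_fun setT Y)
  (X0 : forall w, 0 <= X w) (Y0 : forall w, 0 <= Y w)
  (h : forall C, measurable C -> P (X @^-1` C `&` E) = (P E * P (Y @^-1` C))%E) :
  (\int[P]_w ((\1_E w * X w)%:E) = P E * \int[P]_w (Y w)%:E)%E.
Proof.
pose Z := fun w => \1_E w * (X w + 1) - 1.
have ZE w : Z w = if w \in E then X w else -1.
  by rewrite /Z indicE; case: (w \in E); rewrite ?mul1r ?mul0r ?addrK ?sub0r.
have mZ : measurable_fun setT Z.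
  apply: measurable_realfun.measurable_funB; last exact: measurable_cst.
  apply: measurable_realfun.measurable_funM.
    exact: measurable_realfun.measurable_indic.
  apply: measurable_realfun.measurable_funD => //; exact: measurable_cst.
pose D := `[0%R, +oo[%classic : set R.
have mD : measurable D by exact: measurable_itv.
have DE y : D y <-> 0 <= y by rewrite /D /= in_itv /= andbT.
have ZD : Z @^-1` D = E.
  apply/seteqP; split => w /=; rewrite ZE.
    by case: ifPn => [/set_mem//|_]; rewrite DE ler0N1.
  by move=> wE; rewrite (mem_set wE) DE.
have Pc : 0 <= fine (P E) by apply: fine_ge0.
have PE : P E = (fine (P E))%:E by rewrite fineK // fin_num_measure.
transitivity (\int[P]_(w in E) (Z w)%:E)%E.
  rewrite [RHS]integral_mkcond; apply: eq_integral => w _.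
  rewrite /patch ZE indicE; case: (w \in E); rewrite /= ?mul1r ?mul0r //.
transitivity (\int[pushforward P Z]_(y in D) (y%:E))%E.
  rewrite ge0_integral_pushforward //; first by rewrite ZD.
  by move=> y /set_mem; rewrite DE lee_fin.
rewrite (eq_measure_integral (mscale (NngNum Pc) (pushforward P Y))); last first.
  move=> A mA AD; change (P (Z @^-1` A) = ((fine (P E))%:E * P (Y @^-1` A))%E); rewrite -PE.
  rewrite -h //; congr (P _); apply/seteqP; split => w /=.
    by rewrite ZE; case: ifPn => [/set_mem wE XA|_ /AD]; [split | rewrite DE ler0N1].
  by case=> XA wE; rewrite ZE (mem_set wE).
rewrite ge0_integral_mscale //; last by move=> y; rewrite DE lee_fin.
change ((fine (P E))%:E * \int[pushforward P Y]_(x in D) x%:E = P E * \int[P]_w (Y w)%:E)%E.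
rewrite -PE ge0_integral_pushforward //; last by move=> y /set_mem; rewrite DE lee_fin.
congr (_ * _)%E; congr (integral _ _ _).
by apply/seteqP; split => w //= _; rewrite DE.
Qed.
Lemma hist_meas d (O : measurableType d) (R : realType) (K : nat)
  (loss : nat -> 'I_K -> O -> R) (S : nat -> O -> {set 'I_K}) (k : nat -> O -> 'I_K)
  (S_meas : forall t A, measurable [set w | S t w = A])
  (k_meas : forall t j, measurable [set w | k t w = j]) t A j :
  measurable (history_event loss S k t A j (fun _ _ => setT)).
Proof.
have Hn n : measurable [set w | forall s, (s < n)%N -> S s w = A s /\ k s w = j s].
  elim: n => [|n IH].
    rewrite (_ : [set w | _] = setT); first exact: measurableT.
    by apply/seteqP; split => w //= _ s.
  rewrite (_ : [set w | _] = [set w | forall s, (s < n)%N -> S s w = A s /\ k s w = j s]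
     `&` ([set w | S n w = A n] `&` [set w | k n w = j n])).
    by apply: measurableI => //; apply: measurableI; [exact: S_meas|exact: k_meas].
  apply/seteqP; split => w /=.
    move=> H; split; first by move=> s sn; apply: H; exact: leqW.
    by have [] := H n (ltnSn n).
  move=> [H [h1 h2]] s; rewrite ltnS leq_eqVlt => /orP [/eqP -> | /H] //.
rewrite (_ : history_event _ _ _ _ _ _ _ = [set w | forall s, (s < t.+1)%N -> S s w = A s /\ k s w = j s]) //.
by apply/seteqP; split => w /=; [case => H _ s; exact: H | move=> H; split => // s _ i].
Qed.

Lemma decomp d (O : measurableType d) (R : realType) (P : probability O R) (K : nat)
  (loss : nat -> 'I_K -> O -> R) (S : nat -> O -> {set 'I_K}) (k : nat -> O -> 'I_K)
  (S_meas : forall t A, measurable [set w | S t w = A])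
  (k_meas : forall t j, measurable [set w | k t w = j]) t A (G : set O) :
  measurable G ->
  P (G `&` [set w | S t w = A]) =
  (\sum_(f : {ffun 'I_t.+1 -> {set 'I_K} * 'I_K} | (f ord_max).1 == A)
     P (G `&` history_event loss S k t (fun s => (f (inord s)).1)
               (fun s => (f (inord s)).2) (fun _ _ => setT)))%E.
Proof.
move=> mG.
set H := fun f : {ffun 'I_t.+1 -> {set 'I_K} * 'I_K} => history_event loss S k t (fun s => (f (inord s)).1)
               (fun s => (f (inord s)).2) (fun _ _ => setT).
have mH f : measurable (H f) by exact: hist_meas.
have pt w : \1_(G `&` [set w | S t w = A]) w =
    \sum_(f : {ffun 'I_t.+1 -> {set 'I_K} * 'I_K} | (f ord_max).1 == A) \1_(G `&` H f) w :> R.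
  pose fw := [ffun s : 'I_t.+1 => (S s w, k s w)].
  have Hf f : (H f w) <-> f = fw.
    split.
    - case=> Hw _; apply/ffunP => s; rewrite ffunE.
      have := Hw s; rewrite inord_val; case; first by rewrite -ltnS.
      by case: (f s) => a b /= <- <-.
    - by move=> ->; split => // s st; rewrite ffunE /= inordK.
  have fwt : (fw ord_max).1 = S t w by rewrite ffunE.
  case: (boolP ((fw ord_max).1 == A)) => hA.
    rewrite (bigD1 fw) //= big1 ?addr0.
      rewrite !indicE; suff -> : (w \in G `&` [set w0 | S t w0 = A]) = (w \in G `&` H fw) by []; apply/idP/idP => /set_mem [Gw _];
        apply/mem_set; split => //=.
        by apply/Hf.
      by rewrite -fwt; apply/eqP.
    move=> f /andP [_ ffw]; rewrite indicE memNset //; case=> _ /Hf /eqP.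
    by rewrite (negbTE ffw).
  rewrite big1.
    rewrite indicE memNset //; case=> _ /= SA; move: hA; by rewrite fwt SA eqxx.
  move=> f fA; rewrite indicE memNset //; case=> _ /Hf ffw.
  by move: hA; rewrite -ffw fA.
transitivity (\int[P]_w (\1_(G `&` [set w | S t w = A]) w)%:E)%E.
  by rewrite integral_indic ?setIT //; apply: measurableI.
under eq_integral do rewrite pt -sumEFin -big_filter.
rewrite ge0_integral_sum //.
rewrite big_filter; apply: eq_bigr => f _.
by rewrite integral_indic ?setIT //; apply: measurableI.
move=> f; apply/measurable_realfun.measurable_EFinP.
by apply: measurable_realfun.measurable_indic; apply: measurableI.
Qed.

Lemma indep_event d (O : measurableType d) (R : realType) (P : probability O R) (K : nat)
  (loss : nat -> 'I_K -> O -> R) (S : nat -> O -> {set 'I_K}) (k : nat -> O -> 'I_K)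
  (loss_meas : forall t i, measurable_fun setT (loss t i))
  (S_meas : forall t A, measurable [set w | S t w = A])
  (k_meas : forall t j, measurable [set w | k t w = j])
  (loss_ident : forall t (C : 'I_K -> set R), (forall i, measurable (C i)) ->
     P (loss_event loss t C) = P (loss_event loss 0 C))
  (loss_indep : forall t (C : 'I_K -> set R) (A : nat -> {set 'I_K})
     (j : nat -> 'I_K) (B : nat -> 'I_K -> set R),
     (forall i, measurable (C i)) -> (forall s i, measurable (B s i)) ->
     P (loss_event loss t C `&` history_event loss S k t A j B)
     = (P (loss_event loss t C) * P (history_event loss S k t A j B))%E)
  t A i (C : set R) : measurable C ->
  P (loss t i @^-1` C `&` [set w | S t w = A]) =
  (P [set w | S t w = A] * P (loss 0%N i @^-1` C))%E.
Proof.
move=> mC.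
pose C' := fun i' => if i' == i then C else setT.
have mC' i' : measurable (C' i') by rewrite /C'; case: ifP.
have LE t' : loss_event loss t' C' = loss t' i @^-1` C.
  apply/seteqP; split => w /=.
    by move=> /(_ i); rewrite /C' eqxx.
  by move=> Ci i'; rewrite /C'; case: ifP => [/eqP ->|].
have mX : measurable (loss t i @^-1` C).
  by rewrite -[X in measurable X]setTI; exact: loss_meas.
rewrite (@decomp _ _ _ P _ loss S k S_meas k_meas t A _ mX).
rewrite -[in RHS](setTI [set w | S t w = A]) (@decomp _ _ _ P _ loss S k S_meas k_meas t A _ measurableT).
rewrite muleC ge0_sume_distrr; last by move=> f _; apply: measure_ge0; apply: measurableI => //; exact: hist_meas.
apply: eq_bigr => f _.
rewrite setTI -(LE t) loss_indep // (LE t) -(LE t) loss_ident // (LE 0%N).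
by []. Qed.

Lemma indep_exp d (O : measurableType d) (R : realType) (P : probability O R) (K : nat)
  (loss : nat -> 'I_K -> O -> R) (S : nat -> O -> {set 'I_K}) (k : nat -> O -> 'I_K)
  (loss_meas : forall t i, measurable_fun setT (loss t i))
  (loss_range : forall t i w, 0 <= loss t i w <= 1)
  (S_meas : forall t A, measurable [set w | S t w = A])
  (k_meas : forall t j, measurable [set w | k t w = j])
  (loss_ident : forall t (C : 'I_K -> set R), (forall i, measurable (C i)) ->
     P (loss_event loss t C) = P (loss_event loss 0 C))
  (loss_indep : forall t (C : 'I_K -> set R) (A : nat -> {set 'I_K})
     (j : nat -> 'I_K) (B : nat -> 'I_K -> set R),
     (forall i, measurable (C i)) -> (forall s i, measurable (B s i)) ->
     P (loss_event loss t C `&` history_event loss S k t A j B)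
     = (P (loss_event loss t C) * P (history_event loss S k t A j B))%E)
  t A i :
  (\int[P]_w ((\1_[set w | S t w = A] w * loss t i w)%:E) =
   P [set w | S t w = A] * \int[P]_w (loss 0%N i w)%:E)%E.
Proof.
apply: indep_int => //.
- by move=> w; case/andP: (loss_range t i w).
- by move=> w; case/andP: (loss_range 0%N i w).
- by move=> C mC; apply: (@indep_event _ _ _ P _ loss S k loss_meas S_meas k_meas loss_ident loss_indep).
Qed.
Lemma sel_sum d (O : measurableType d) (R : realType) (X : finType)
  (f : O -> X) (g : X -> O -> R) w :
  g (f w) w = \sum_(x : X) \1_[set w | f w = x] w * g x w.
Proof.
rewrite (bigD1 (f w)) //= indicE mem_set // mul1r big1 ?addr0 // => x xf.
by rewrite indicE memNset ?mul0r //= => /esym/eqP; rewrite (negbTE xf).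
Qed.

Lemma meas_sel d (O : measurableType d) (R : realType) (X : finType)
  (f : O -> X) (g : X -> O -> R) :
  (forall x, measurable [set w | f w = x]) ->
  (forall x, measurable_fun setT (g x)) ->
  measurable_fun setT (fun w => g (f w) w).
Proof.
move=> mf mg.
rewrite (_ : (fun w => _) = (fun w => \sum_(x : X) \1_[set w | f w = x] w * g x w)).
  apply: measurable_sum => x.
  apply: measurable_realfun.measurable_funM => //.
by apply/funext => w; rewrite -sel_sum.
Qed.

Lemma sum_Lfun d (O : measurableType d) (R : realType) (P : probability O R)
  (F : nat -> O -> R) (n : nat) :
  (forall t, measurable_fun setT (F t)) -> (forall t w, 0 <= F t w <= 1) ->
  (fun w => \sum_(t < n) F t w) \in Lfun P 1.
Proof.
move=> mF F01; apply/Lfun1_integrable.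
have mS : measurable_fun setT (fun w => \sum_(t < n) F t w).
  by apply: measurable_sum.
apply/integrableP; split; first exact/measurable_realfun.measurable_EFinP.
apply: (le_lt_trans (integral_le_bound (n%:R)%:E _ _ _ _)) => //.
- exact/measurable_realfun.measurable_EFinP.
- apply: aeW => w _ /=; rewrite lee_fin ger0_norm; last first.
    by apply: sumr_ge0 => t _; case/andP: (F01 t w).
  apply: (@le_trans _ _ (\sum_(t < n) (1:R))).
    by apply: ler_sum => t _; case/andP: (F01 t w).
  by rewrite big_const_ord iter_addr addr0.
- apply: lte_mul_pinfty => //.
  by apply: (le_lt_trans (probability_le1 P measurableT)); rewrite ltry.
Qed.
Lemma ord_selE K (sigma : {perm 'I_K}) (A : {set 'I_K}) : A != finset.set0 ->
  exists x L, [seq sigma i | i <- enum 'I_K & sigma i \in A] = x :: L /\ x \in A.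
Proof.
move=> /set0Pn [a aA].
have Hm : a \in [seq sigma i | i <- enum 'I_K & sigma i \in A].
  rewrite -[a](permKV sigma) map_f // mem_filter permKV aA mem_enum //.
case E : [seq sigma i | i <- enum 'I_K & sigma i \in A] => [|x L].
  by rewrite E in Hm.
exists x, L; split => //.
have : x \in [seq sigma i | i <- enum 'I_K & sigma i \in A] by rewrite E mem_head.
by case/mapP => i; rewrite mem_filter => /andP [? _] ->.
Qed.

Lemma ord_sel_def K (sigma : {perm 'I_K}) (A : {set 'I_K}) d d' :
  A != finset.set0 -> ord_sel sigma A d = ord_sel sigma A d'.
Proof. by move=> /(@ord_selE _ sigma A) [x [L [E _]]]; rewrite /ord_sel E. Qed.

Lemma ord_sel_in K (sigma : {perm 'I_K}) (A : {set 'I_K}) d :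
  A != finset.set0 -> ord_sel sigma A d \in A.
Proof. by move=> /(@ord_selE _ sigma A) [x [L [E xA]]]; rewrite /ord_sel E. Qed.

Lemma sort_perm K (le : rel 'I_K) : transitive le -> total le ->
  exists sigma : {perm 'I_K}, forall A d, A != finset.set0 ->
    forall a, a \in A -> le (ord_sel sigma A d) a.
Proof.
move=> tr tot.
set s := sort le (enum 'I_K).
have : perm_eq s (ord_tuple K) by rewrite val_ord_tuple perm_sort.
case/tuple_permP => p Hp.
have Hs : s = map p (enum 'I_K).
  rewrite Hp /=; apply: eq_map => i; exact: tnth_ord_tuple.
exists p => A d A0 a aA.
have E : [seq p i | i <- enum 'I_K & p i \in A] = [seq x <- s | x \in A].
  by rewrite Hs [RHS]filter_map.
have sL : sorted le ([seq x <- s | x \in A]) by apply: sorted_filter => //; exact: sort_sorted.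
have aL : a \in [seq x <- s | x \in A] by rewrite mem_filter aA mem_sort mem_enum.
rewrite /ord_sel E; move: sL aL; case: ([seq x <- s | x \in A]) => [//|x L] /= sL.
rewrite inE => /orP [/eqP ->|aL].
  by case/orP: (tot x x).
by move/allP: (order_path_min tr sL) => /(_ a aL).
Qed.

Lemma EH d (O : measurableType d) (R : realType) (P : probability O R) (K : nat)
  (loss : nat -> 'I_K -> O -> R) (S : nat -> O -> {set 'I_K}) (k : nat -> O -> 'I_K)
  (loss_meas : forall t i, measurable_fun setT (loss t i))
  (loss_range : forall t i w, 0 <= loss t i w <= 1)
  (S_meas : forall t A, measurable [set w | S t w = A])
  (k_meas : forall t j, measurable [set w | k t w = j])
  (loss_ident : forall t (C : 'I_K -> set R), (forall i, measurable (C i)) ->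
     P (loss_event loss t C) = P (loss_event loss 0 C))
  (loss_indep : forall t (C : 'I_K -> set R) (A : nat -> {set 'I_K})
     (j : nat -> 'I_K) (B : nat -> 'I_K -> set R),
     (forall i, measurable (C i)) -> (forall s i, measurable (B s i)) ->
     P (loss_event loss t C `&` history_event loss S k t A j B)
     = (P (loss_event loss t C) * P (history_event loss S k t A j B))%E)
  (Tn : nat) (pi : {set 'I_K} -> 'I_K) :
  (\int[P]_w ((\sum_(t < Tn) loss t (pi (S t w)) w)%:E) =
   \sum_(t < Tn) \sum_(A : {set 'I_K})
     P [set w | S t w = A] * \int[P]_w (loss 0%N (pi A) w)%:E)%E.
Proof.
transitivity (\int[P]_w (\sum_(t < Tn) \sum_(A : {set 'I_K})
   ((\1_[set w | S t w = A] w * loss t (pi A) w)%:E)))%E.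
  apply: eq_integral => w _; rewrite -sumEFin; apply: eq_bigr => t _.
  by rewrite sumEFin -(@sel_sum _ _ R _ (S t) (fun A => loss t (pi A)) w).
rewrite ge0_integral_sum //; last 2 first.
- move=> t; apply: emeasurable_sum => A; apply/measurable_realfun.measurable_EFinP.
  apply: measurable_realfun.measurable_funM; last exact: loss_meas.
  exact: measurable_realfun.measurable_indic.
- move=> t w _; apply: sume_ge0 => A _; rewrite lee_fin mulr_ge0 //.
  by case/andP: (loss_range t (pi A) w).
apply: eq_bigr => t _; rewrite ge0_integral_sum //; last 2 first.
- move=> A; apply/measurable_realfun.measurable_EFinP.
  apply: measurable_realfun.measurable_funM; last exact: loss_meas.
  exact: measurable_realfun.measurable_indic.
- move=> A w _; rewrite lee_fin mulr_ge0 //.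
  by case/andP: (loss_range t (pi A) w).
apply: eq_bigr => A _.
exact: (@indep_exp _ _ _ P _ loss S k loss_meas loss_range S_meas k_meas loss_ident loss_indep).
Qed.
Theorem mainTheorem7 (d : measure_display) (Omega : measurableType d)
  (R : realType) (P : probability Omega R) (K : nat)
  (loss : nat -> 'I_K -> Omega -> R)
  (S : nat -> Omega -> {set 'I_K}) (k : nat -> Omega -> 'I_K) (Tn : nat)
  (* losses are random variables with values in [0,1] *)
  (loss_meas : forall t i, measurable_fun setT (loss t i))
  (loss_range : forall t i w, 0 <= loss t i w <= 1)
  (* availability sets and chosen arms are random variables *)
  (S_meas : forall t A, measurable [set w | S t w = A])
  (k_meas : forall t j, measurable [set w | k t w = j])
  (S_nonempty : forall t w, S t w != finset.set0)
  (k_avail : forall t w, k t w \in S t w)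
  (* the loss vectors are identically distributed *)
  (loss_ident : forall t (C : 'I_K -> set R), (forall i, measurable (C i)) ->
     P (loss_event loss t C) = P (loss_event loss 0 C))
  (* l_t is independent of everything determined before l_t(k_t) is observed *)
  (loss_indep : forall t (C : 'I_K -> set R) (A : nat -> {set 'I_K})
     (j : nat -> 'I_K) (B : nat -> 'I_K -> set R),
     (forall i, measurable (C i)) -> (forall s i, measurable (B s i)) ->
     P (loss_event loss t C `&` history_event loss S k t A j B)
     = (P (loss_event loss t C) * P (history_event loss S k t A j B))%E) :
  \big[maxe/-oo%E]_(pi : {ffun {set 'I_K} -> 'I_K} | `[< is_policy pi >])
      policy_regret P loss S k Tn pi
  = \big[maxe/-oo%E]_(sigma : {perm 'I_K})
      exp_ordering_regret P loss S k Tn sigma.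
Proof.
have [w0 _] : exists w : Omega, True.
  case: (pselect (exists w : Omega, True)) => // nw.
  have h0 : P setT = 0%E.
    rewrite (_ : setT = set0) ?measure0 //.
    by apply/seteqP; split => w // _; apply: nw; exists w.
  have h1 := probability_setT P.
  have : (0%E : \bar R) = 1%E by rewrite -h0 -h1.
  by move=> [] /eqP; rewrite eq_sym oner_eq0.
pose d0 := k 0%N w0.
pose mu i := (\int[P]_w (loss 0%N i w)%:E)%E.
have [ss Hss] := @sort_perm K (fun i j => mu i <= mu j)%E
  (fun y x z => @le_trans _ _ (mu y) (mu x) (mu z)) (fun x y => le_total (mu x) (mu y)).
pose pis (s : {perm 'I_K}) := [ffun A => ord_sel s A d0].
have pol s : is_policy (pis s) by move=> A A0; rewrite ffunE ord_sel_in.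
have OR s : exp_ordering_regret P loss S k Tn s = policy_regret P loss S k Tn (pis s).
  rewrite /exp_ordering_regret /policy_regret; congr (expectation P _).
  apply/funext => w; rewrite sumrB; congr (_ - _); apply: eq_bigr => t _.
  by rewrite ffunE (@ord_sel_def _ s (S t w) _ d0 (S_nonempty t w)).
have LG := @sum_Lfun _ _ _ P (fun t w => loss t (k t w) w) Tn
  (fun t => @meas_sel _ _ R _ (k t) (fun j => loss t j) (k_meas t) (loss_meas t))
  (fun t w => loss_range t (k t w) w).
have LH (pi : {ffun {set 'I_K} -> 'I_K}) := @sum_Lfun _ _ _ P
  (fun t w => loss t (pi (S t w)) w) Tn
  (fun t => @meas_sel _ _ R _ (S t) (fun A => loss t (pi A)) (S_meas t) (fun A => loss_meas t (pi A)))
  (fun t w => loss_range t (pi (S t w)) w).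
have key pi : is_policy pi ->
    (policy_regret P loss S k Tn pi <= policy_regret P loss S k Tn (pis ss))%E.
  move=> Hpi; rewrite /policy_regret (expectationB LG (LH pi)) (expectationB LG (LH (pis ss))).
  apply: leeB => //.
  rewrite !expectation.unlock.
  rewrite (@EH _ _ _ P _ loss S k loss_meas loss_range S_meas k_meas loss_ident loss_indep Tn pi).
  rewrite (@EH _ _ _ P _ loss S k loss_meas loss_range S_meas k_meas loss_ident loss_indep Tn (pis ss)).
  apply: lee_sum => t _; apply: lee_sum => A _.
  case: (eqVneq A finset.set0) => [->|A0].
    rewrite (_ : [set w | S t w = finset.set0] = set0) ?measure0 ?mul0e //.
    by apply/seteqP; split => w //= /eqP; rewrite (negbTE (S_nonempty t w)).
  apply: lee_wpmul2l => //.
  by rewrite ffunE; exact: (Hss A d0 A0 (pi A) (Hpi A A0)).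
apply/eqP; rewrite eq_le; apply/andP; split.
  apply: bigmax_le => [|pi /asboolP Hpi]; first exact: leNye.
  by apply: (le_trans (key pi Hpi)); rewrite -OR; exact: le_bigmax.
apply: bigmax_le => [|s _]; first exact: leNye.
rewrite OR; apply: le_bigmax_cond; exact/asboolP/pol.
Qed.
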